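(* Let $(X,d)$ be a compact metric space with $\operatorname{diam}(X,d)=1/2$, let $a\ge\lambda\ge6$ and $L>1$, let $\theta\in\mathcal J(X,d)$, and let $\mu$ be a $q$-homogeneous measure on $(X,\theta)$. Let $\mathcal S$ be a hyperbolic filling with parameters $a,\lambda$. For $v\in\mathcal S$ and $k\in\mathbb N$ define $\rho_v:\mathcal S_{\pi_2(v)+k}\to[0,\infty)$ by $\rho_v(w)=\big(\mu(B_w)/\mu(B_v)\big)^{1/q}$ if $B_w\cap B_d(\pi_1(v),(L+1)a^{-\pi_2(v)})\ne\emptyset$ and $w\in\gamma$ for some $\gamma\in\Gamma_{k,L}(v)$, and $\rho_v(w)=0$ otherwise. Then there exist $c>0$ and $k_0\in\mathbb N$, depending only on $d,\theta,\mu,a,L$, such that for all $k\ge k_0$, all $v\in\mathcal S$ and all $\gamma\in\Gamma_{k,L}(v)$, $\sum_{w\in\gamma}\rho_v(w)\ge c$.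
   Context: Hyperbolic filling: $X_0\subset X_1\subset\cdots$ increasing, each $X_n$ a maximal $a^{-n}$-separated subset of $X$; $\mathcal S_n=\{(x,n):x\in X_n\}$, $\mathcal S=\bigcup_n\mathcal S_n$, $\pi_1(x,n)=x$, $\pi_2(x,n)=n$, $B_v=B_d(\pi_1(v),a^{-\pi_2(v)})$ (open $d$-ball). $G_n$ is the graph on $\mathcal S_n$ in which distinct $v,w$ are adjacent iff $B(\pi_1(v),\lambda a^{-n})\cap B(\pi_1(w),\lambda a^{-n})\neq\emptyset$. $\Gamma_{k,L}(v)$ is the set of paths $(v_1,\dots,v_n)$ in $G_{\pi_2(v)+k}$ (consecutive vertices adjacent) with $\pi_1(v_1)\in B_v$ and $\pi_1(v_n)\notin B_d(\pi_1(v),La^{-\pi_2(v)})$. The sum $\sum_{w\in\gamma}$ runs over the entries of $\gamma$. $\mathcal J(X,d)$: metrics $\theta$ on $X$ such that $\theta(x,a)/\theta(x,b)\le\eta(d(x,a)/d(x,b))$ for all $x,a,b$, $x\ne b$, for some homeomorphism $\eta:[0,\infty)\to[0,\infty)$. A nonzero Borel measure $\mu$ is $q$-homogeneous on $(X,\theta)$ if there is $C$ with $\mu(B_\theta(x,R))\le C(R/r)^q\mu(B_\theta(x,r))$ for all $x\in X$, $0<r\le R$. *)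

(* Defs.v *)
From HB Require Import structures.
From mathcomp Require Import all_boot all_order all_algebra.
From mathcomp Require Import all_classical all_reals all_analysis.
From Stdlib Require List.
Set Implicit Arguments. Unset Strict Implicit. Unset Printing Implicit Defensive.
Import Order.TTheory GRing.Theory Num.Theory numFieldNormedType.Exports.
Local Open Scope classical_set_scope.
Local Open Scope ring_scope.

Section Defs.
Variable R : realType.
Variable T : Type.
Implicit Types (d theta : T -> T -> R).

Definition oball d (x : T) (r : R) : set T := [set y | d x y < r].

Definition is_metric d : Prop :=
  [/\ (forall x y, 0 <= d x y), (forall x y, d x y = 0 <-> x = y),
      (forall x y, d x y = d y x) & (forall x y z, d x z <= d x y + d y z)].

Definition metric_open d (A : set T) : Prop :=
  forall x, A x -> exists2 r, 0 < r & oball d x r `<=` A.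

Definition metric_compact d : Prop :=
  forall C : set (set T), C `<=` metric_open d ->
    setT `<=` \bigcup_(A in C) A ->
    exists2 D : set (set T), finite_set D & D `<=` C /\ setT `<=` \bigcup_(A in D) A.

Definition diam d : R := sup (range (fun p : T * T => d p.1 p.2)).

Definition homeo_nonneg (eta : R -> R) : Prop :=
  exists etai : R -> R,
    (forall t, 0 <= t -> [/\ 0 <= eta t, 0 <= etai t, etai (eta t) = t & eta (etai t) = t])
    /\ {within [set t : R | 0 <= t], continuous eta}
    /\ {within [set t : R | 0 <= t], continuous etai}.

Definition in_J d theta : Prop :=
  is_metric theta /\
  exists eta : R -> R, homeo_nonneg eta /\
    forall x a b, x <> b -> theta x a / theta x b <= eta (d x a / d x b).

Definition separated d (eps : R) (Y : set T) : Prop :=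
  forall x y, Y x -> Y y -> x <> y -> eps <= d x y.

Definition maximal_separated d (eps : R) (Y : set T) : Prop :=
  separated d eps Y /\ forall Z, Y `<=` Z -> separated d eps Z -> Z = Y.

Definition hyperbolic_filling d (a : R) (Xn : nat -> set T) : Prop :=
  (forall n, Xn n `<=` Xn n.+1) /\ forall n, maximal_separated d (a ^- n) (Xn n).

(* vertices (x,n) of S; pi_1 = .1, pi_2 = .2 *)
Definition inS (Xn : nat -> set T) (v : T * nat) : Prop := Xn v.2 v.1.

Definition Bv d (a : R) (v : T * nat) : set T := oball d v.1 (a ^- v.2).

Definition adjacent d (a lam : R) (m : nat) (v w : T * nat) : Prop :=
  v <> w /\ (oball d v.1 (lam * a ^- m) `&` oball d w.1 (lam * a ^- m)) !=set0.

Fixpoint chain (rel : T * nat -> T * nat -> Prop) (g : seq (T * nat)) : Prop :=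
  match g with
  | v :: ((w :: _) as t) => rel v w /\ chain rel t
  | _ => True
  end.

Definition is_path d (a lam : R) (Xn : nat -> set T) (m : nat) (g : seq (T * nat)) : Prop :=
  g <> [::] /\ List.Forall (fun w => w.2 = m /\ Xn m w.1) g /\ chain (adjacent d a lam m) g.

Definition Gamma d (a lam L : R) (Xn : nat -> set T) (k : nat) (v : T * nat)
  (g : seq (T * nat)) : Prop :=
  match g with
  | [::] => False
  | w1 :: g' => [/\ is_path d a lam Xn (v.2 + k) g,
                   oball d v.1 (a ^- v.2) w1.1
                 & ~ oball d v.1 (L * a ^- v.2) (last w1 g').1]
  end.

End Defs.

Section Meas.
Variables (R : realType) (dsp : measure_display) (X : measurableType dsp).

Definition q_homogeneous (theta : X -> X -> R) (mu : set X -> \bar R) (q : R) : Prop :=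
  mu setT <> 0%E /\
  exists C : R, forall (x : X) (r Rr : R), 0 < r -> r <= Rr ->
    (mu (oball theta x Rr) <= (C * (Rr / r) `^ q)%:E * mu (oball theta x r))%E.

Definition rho (d : X -> X -> R) (a lam L : R) (Xn : nat -> set X) (mu : set X -> \bar R)
  (q : R) (k : nat) (v w : X * nat) : R :=
  if `[< (Bv d a w `&` oball d v.1 ((L + 1) * a ^- v.2)) !=set0 /\
        exists g, Gamma d a lam L Xn k v g /\ List.In w g >]
  then (fine (mu (Bv d a w)) / fine (mu (Bv d a v))) `^ q^-1
  else 0.
End Meas.

(* Main.v *)
Require Import Defs.
From HB Require Import structures.
From mathcomp Require Import all_boot all_order all_algebra.
From mathcomp Require Import all_classical all_reals all_analysis.
From mathcomp Require Import lra ring.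
Import Order.TTheory GRing.Theory Num.Theory numFieldNormedType.Exports.
Local Open Scope classical_set_scope.
Local Open Scope ring_scope.

Set Implicit Arguments. Unset Strict Implicit.


Lemma eta_bounded (R : realType) (eta : R -> R) : homeo_nonneg eta ->
  forall T : R, exists M : R, 1 <= M /\ forall t, 0 <= t -> t <= T -> eta t <= M.
Proof.
move=> [etai [_ [ceta _]]] T.
have [T0|T0] := ltP T 0.
  exists 1; split => // t t0 tT; exfalso; have := le_lt_trans t0 (le_lt_trans tT T0).
  by rewrite ltxx.
have c : {within `[0, T], continuous eta}.
  apply: continuous_subspaceW ceta => t /=; rewrite in_itv /= => /andP[] //.
have [c0 _ Hc] := EVT_max T0 c.
exists (Num.max 1 (eta c0)); split; first by rewrite le_max lexx.
move=> t t0 tT; rewrite le_max; apply/orP; right; apply: Hc.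
by rewrite in_itv /= t0 tT.
Qed.

Lemma qs_le (R : realType) (T : Type) (d theta : T -> T -> R) (eta : R -> R) (M B : R) :
  is_metric d -> is_metric theta ->
  (forall x a b, x <> b -> theta x a / theta x b <= eta (d x a / d x b)) ->
  (forall t, 0 <= t -> t <= B -> eta t <= M) ->
  forall x p q, x <> q -> d x p / d x q <= B -> theta x p <= M * theta x q.
Proof.
move=> [d0 deq _ _] [t0 teq _ _] qs bd x p q xq hB.
have tq : 0 < theta x q.
  rewrite lt_neqAle t0 andbT; apply/eqP => /esym /teq //.
rewrite -ler_pdivrMr //; apply: le_trans (qs _ _ _ xq) _.
apply: bd => //; apply: divr_ge0; exact: d0.
Qed.

Lemma split_first (T : Type) (rel : T * nat -> T * nat -> Prop) (P : T * nat -> Prop)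
  (g : seq (T * nat)) : forall w,
  chain rel (w :: g) -> P w -> ~ P (last w g) ->
  exists g1 z g2, g = g1 ++ z :: g2 /\ (forall u, List.In u (w :: g1) -> P u) /\ ~ P z
     /\ chain rel (w :: rcons g1 z) /\ P (last w g1) /\ rel (last w g1) z.
Proof.
elim: g => [|u g IH] w /= hc Pw nP; first by [].
case: hc => rwu hc.
have [Pu|nPu] := pselect (P u).
  have [g1 [z [g2 [e [h1 [h2 [h3 [h4 h5]]]]]]]] := IH u hc Pu nP.
  exists (u :: g1), z, g2; rewrite e; split => //; split.
    by move=> y /= [<-|[<-|hy]] //; apply: h1; right.
  by [].
exists [::], u, g; split => //; split; first by move=> y /= [<-|].
by [].
Qed.

Lemma chain_sum (R : realType) (T : Type) (rel : T * nat -> T * nat -> Prop)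
  (F : T * nat -> R) (dist : T * nat -> T * nat -> R) (Q : T * nat -> Prop) (k : R) z :
  0 <= k ->
  (forall u u', rel u u' -> Q u -> (Q u' \/ u' = z) -> k * dist u u' <= F u) ->
  (forall u u' u'', dist u u'' <= dist u u' + dist u' u'') ->
  forall h u, chain rel (u :: rcons h z) -> (forall y, List.In y (u :: h) -> Q y) ->
  k * dist u z <= \sum_(y <- u :: h) F y.
Proof.
move=> k0 hF tri; elim => [|v h IH] u /= hc hQ.
  rewrite big_cons big_nil addr0; apply: hF; first by case: hc.
    by apply: hQ; left.
  by right.
case: hc => ruv hc.
rewrite big_cons; apply: le_trans (_ : k * dist u v + k * dist v z <= _).
  by rewrite -mulrDr ler_wpM2l.
apply: lerD.
  apply: hF => //; first by apply: hQ; left.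
  by left; apply: hQ; right; left.
apply: IH => //.
by move=> y hy; apply: hQ; right.
Qed.


Lemma open_meas (R : realType) (dsp : measure_display) (X : measurableType dsp)
  (theta : X -> X -> R) (A : set X) :
  @measurable dsp X = <<s metric_open theta >> -> metric_open theta A ->
  measurable A.
Proof. by move=> E hA; rewrite E; apply: sub_gen_smallest. Qed.

Lemma theta_ball_open (R : realType) (T : Type) (theta : T -> T -> R) x r :
  is_metric theta -> metric_open theta (oball theta x r).
Proof.
move=> [t0 _ _ tri] p /= hp; exists (r - theta x p); first by rewrite subr_gt0.
move=> w /= hw; apply: le_lt_trans (tri x p w) _.
by rewrite -ltrBrDl.
Qed.

Lemma other_point (R : realType) (T : Type) (d : T -> T -> R) :
  is_metric d -> diam d = 1 / 2 -> forall p : T, exists o, o <> p.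
Proof.
move=> [d0 deq _ _] hd p.
apply: contrapT => hn.
have allp : forall o, o = p.
  by move=> o; apply: contrapT => h; apply: hn; exists o.
have : range (fun pr : T * T => d pr.1 pr.2) = [set 0].
  apply/seteqP; split => y /=.
    by move=> [[u v] _ <-] /=; rewrite (allp u) (allp v); apply/deq.
  by move=> ->; exists (p, p) => //=; apply/deq.
move=> e; move: hd; rewrite /diam e sup1 => /eqP.
rewrite eq_sym mul1r invr_eq0 => /eqP; lra.
Qed.

Lemma dball_open (R : realType) (T : Type) (d theta : T -> T -> R) y s :
  is_metric d -> diam d = 1 / 2 -> in_J d theta ->
  metric_open theta (oball d y s).
Proof.
move=> dm hd [tm [eta [heta qs]]] p /= hp.
have [d0 deq dsym dtri] := dm.
have [t0 teq tsym ttri] := tm.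
have [pt hop] := other_point dm hd p.
set del := s - d y p.
have del0 : 0 < del by rewrite subr_gt0.
have [M [M1 hM]] := eta_bounded heta (d p pt / del).
have tpo : 0 < theta p pt.
  rewrite lt_neqAle t0 andbT; apply/eqP => /esym /teq h; exact: hop (esym h).
have M0 : 0 < M by apply: lt_le_trans M1.
exists (theta p pt / M); first by rewrite divr_gt0.
move=> w /= hw.
have [dw|dw] := ltP (d p w) del.
  apply: le_lt_trans (dtri y p w) _.
  by rewrite -ltrBrDl.
exfalso.
have pw : p <> w.
  move=> e; rewrite e in dw; have : d w w = 0 by apply/deq.
  by move=> h; rewrite h in dw; move: (lt_le_trans del0 dw); rewrite ltxx.
have := qs_le dm tm qs hM pw.
move=> /(_ pt) h.
have : theta p pt <= M * theta p w.
  apply: h; apply: ler_wpM2l; first exact: d0.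
  by rewrite lef_pV2 // posrE (lt_le_trans del0 dw).
rewrite -ler_pdivrMl // mulrC => h2.
by move: (le_lt_trans h2 hw); rewrite ltxx.
Qed.

Lemma ball_pos (R : realType) (dsp : measure_display) (X : measurableType dsp)
  (theta : X -> X -> R) (mu : {measure set X -> \bar R}) (q : R) :
  @measurable dsp X = <<s metric_open theta >> -> is_metric theta ->
  q_homogeneous theta mu q ->
  forall x r, 0 < r -> (0 < mu (oball theta x r))%E.
Proof.
move=> E tm [mT [C hC]] x r r0.
have mb : forall y s, measurable (oball theta y s).
  by move=> y s; apply: (open_meas E); apply: theta_ball_open.
rewrite lt0e measure_ge0 andbT; apply/eqP => h0.
apply: mT; apply/eqP; rewrite eq_le measure_ge0 andbT.
apply: le_trans (@measure_sigma_subadditive _ _ _ mu setT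
   (fun N : nat => oball theta x (N%:R + r)) (fun N => mb _ _) measurableT _) _.
  move=> p _; exists (Num.truncn (theta x p)).+1 => //=.
  apply: lt_trans (truncnS_gt _) _; rewrite ltrDl //.
rewrite eseries0 // => N _ _.
apply/eqP; rewrite eq_le measure_ge0 andbT.
apply: le_trans (hC x r (N%:R + r) r0 _) _; first by rewrite lerDr.
by rewrite h0 mule0.
Qed.

Lemma ratio_bound (R : realType) (dsp : measure_display) (X : measurableType dsp)
  (theta : X -> X -> R) (mu : {measure set X -> \bar R}) (q C : R) :
  @measurable dsp X = <<s metric_open theta >> -> is_metric theta ->
  0 < q -> 1 <= C -> (mu setT < +oo)%E ->
  (forall (x : X) (r Rr : R), 0 < r -> r <= Rr ->
    (mu (oball theta x Rr) <= (C * (Rr / r) `^ q)%:E * mu (oball theta x r))%E) ->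
  forall (A B : set X) y rho R0, measurable A -> measurable B -> 0 < rho -> rho <= R0 ->
  oball theta y rho `<=` A -> B `<=` oball theta y R0 -> (0 < mu B)%E ->
  (C^-1) `^ q^-1 * (rho / R0) <= (fine (mu A) / fine (mu B)) `^ q^-1.
Proof.
move=> E tm q0 C1 mfin hC A B y rho R0 mA mB rho0 rhoR sA sB muB.
have mb : forall y s, measurable (oball theta y s).
  by move=> y' s; apply: (open_meas E); apply: theta_ball_open.
have R00 : 0 < R0 by apply: lt_le_trans rhoR.
have finA : mu A \is a fin_num.
  rewrite ge0_fin_numE ?measure_ge0 //; apply: le_lt_trans mfin.
  by apply: le_measure => //; rewrite inE.
have finB : mu B \is a fin_num.
  rewrite ge0_fin_numE ?measure_ge0 //; apply: le_lt_trans mfin.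
  by apply: le_measure => //; rewrite inE.
set a := fine (mu A); set b := fine (mu B).
have eA : mu A = a%:E by rewrite fineK.
have eB : mu B = b%:E by rewrite fineK.
have b0 : 0 < b by rewrite -lte_fin -eB.
have a0 : 0 <= a by rewrite -lee_fin -eA measure_ge0.
set P := (rho / R0) `^ q; set Q := (R0 / rho) `^ q.
have PQ : P * Q = 1.
  rewrite /P /Q -powRM ?divr_ge0 ?ltW //.
  by rewrite mulrA divfK ?gt_eqF // divff ?gt_eqF // powR1.
have P0 : 0 <= P by apply: powR_ge0.
have Q0 : 0 <= Q by apply: powR_ge0.
have hb : b <= C * Q * a.
  rewrite -lee_fin -eB -mulrA !EFinM -eA.


  apply: le_trans (_ : mu (oball theta y R0) <= _)%E.
    by apply: le_measure => //; rewrite inE.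
  apply: le_trans (hC y rho R0 rho0 rhoR) _.
  rewrite EFinM -muleA lee_pmul2l ?lte_fin ?(lt_le_trans ltr01 C1) //.
  rewrite lee_wpmul2l ?lee_fin //.
  by apply: le_measure => //; rewrite inE.
have -> : rho / R0 = P `^ q^-1.
  by rewrite /P -powRrM divff ?gt_eqF // powRr1 // divr_ge0 ?ltW.
rewrite -powRM ?invr_ge0 ?(le_trans ler01 C1) //.
apply: (@ge0_ler_powR _ q^-1).
- by rewrite invr_ge0 ltW.
- by rewrite nnegrE mulr_ge0 // invr_ge0 (le_trans ler01 C1).
- by rewrite nnegrE divr_ge0 // ltW.
rewrite ler_pdivlMr //.
apply: le_trans (_ : C^-1 * P * (C * Q * a) <= _).
  by rewrite ler_wpM2l // mulr_ge0 // invr_ge0 (le_trans ler01 C1).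
have -> : C^-1 * P * (C * Q * a) = (C^-1 * C) * (P * Q) * a by ring.
by rewrite PQ mulVf ?gt_eqF ?(lt_le_trans ltr01 C1) // !mul1r.
Qed.

Unset Implicit Arguments. Set Strict Implicit.

Theorem lemma4p5 (R : realType) (dsp : measure_display) (X : measurableType dsp)
  (d theta : X -> X -> R) (mu : {measure set X -> \bar R}) (q a L : R) :
  is_metric d -> metric_compact d -> diam d = 1 / 2 ->
  6 <= a -> 1 < L ->
  in_J d theta ->
  @measurable dsp X = <<s metric_open theta >> ->
  (mu setT < +oo)%E ->
  0 < q -> q_homogeneous theta mu q ->
  exists2 c : R, 0 < c &
  exists k0 : nat,
    forall lam : R, 6 <= lam -> lam <= a ->
    forall Xn : nat -> set X, hyperbolic_filling d a Xn ->
    forall k : nat, (k0 <= k)%N ->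
    forall v : X * nat, inS Xn v ->
    forall g : seq (X * nat), Gamma d a lam L Xn k v g ->
      c <= \sum_(w <- g) rho d a lam L Xn mu q k v w.
Proof.
move=> dm _ hdiam a6 L1 hJ E mfin q0 hq.
have hJ' := hJ; case: hJ' => tm [eta [heta qs]].
have [d0 deq dsym dtri] := dm.
have [t0 teq tsym ttri] := tm.
have [mT [C hC]] := hq.
set C' := Num.max C 1.
have C'1 : 1 <= C' by rewrite le_max lexx orbT.
have hC' : forall x r Rr, 0 < r -> r <= Rr ->
    (mu (oball theta x Rr) <= (C' * (Rr / r) `^ q)%:E * mu (oball theta x r))%E.
  move=> x r Rr r0 rR; apply: le_trans (hC x r Rr r0 rR) _.
  apply: lee_wpmul2r; first exact: measure_ge0.
  by rewrite lee_fin ler_wpM2r ?powR_ge0 // le_max lexx.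
set B := (L + 2 * a) / (L - 1) + (L + 2 * a).
have [M [M1 hM]] := eta_bounded heta B.
have M0 : 0 < M by apply: lt_le_trans M1.
set c0 := (C'^-1) `^ q^-1 / (3 * M ^+ 2).
have c00 : 0 < c0.
  rewrite /c0 divr_gt0 ?powR_gt0 ?invr_gt0 ?(lt_le_trans ltr01 C'1) //.
  by rewrite mulr_gt0 // exprn_gt0.
exists (c0 / M); first by rewrite divr_gt0.
exists 0%N.
move=> lam lam6 lama Xn hXn k _ [x n] vS g hG.
have hG0 := hG.
case: g hG hG0 => [|w1 g'] //= [[_ [hF hch]] hw1 hlast] hG0.
set r := a ^- n; set m := (n + k)%N; set s := a ^- m.
have a1 : 1 <= a by lra.
have r0 : 0 < r by rewrite /r invr_gt0 exprn_gt0 // (lt_le_trans ltr01 a1).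
have s0 : 0 < s by rewrite /s invr_gt0 exprn_gt0 // (lt_le_trans ltr01 a1).
have sr : s <= r.
  rewrite /s /r lef_pV2 ?posrE ?exprn_gt0 ?(lt_le_trans ltr01 a1) //.
  by apply: ler_weXn2l => //; rewrite /m leq_addr.
have adj_d : forall u u', Defs.adjacent d a lam m u u' -> d u.1 u'.1 < 2 * a * s.
  move=> u u' [_ [p [/= h1 h2]]].
  apply: le_lt_trans (dtri _ p _) _; rewrite (dsym p).
  have : lam * a ^- m <= a * s by rewrite ler_wpM2r // ltW.
  rewrite -/s -mulrA; move: (a * s) => as1 h3; move: (lam * s) h1 h2 h3 => ls1.
  rewrite /oball /=; lra.
set P := fun u : X * nat => d x u.1 < L * r.
have Pw1 : P w1.
  rewrite /P; apply: lt_le_trans hw1 _; rewrite ler_pMl //; exact: ltW.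
have [g1 [z [g2 [eg [hP1 [nPz [hch1 [Plast adjlast]]]]]]]] :=
  @split_first _ _ (fun u => P u : Prop) _ _ hch Pw1 hlast.
have memg : forall u, List.In u (w1 :: g1) \/ u = z -> List.In u (w1 :: g').
  move=> u [[<-|hu]|->]; [by left|right|right]; rewrite eg; apply: List.in_or_app.
    by left.
  by right; left.
have m2 : forall u, List.In u (w1 :: g') -> u.2 = m.
  by move=> u hu; have := (proj1 (List.Forall_forall _ _) hF u hu); case.
have hz1 : L * r <= d x z.1 by rewrite leNgt; apply/negP.
have hz2 : d x z.1 < L * r + 2 * a * s.
  apply: le_lt_trans (dtri _ (last w1 g1).1 _) _.
  by apply: ltrD; [exact: Plast|exact: adj_d].
have xz : x <> z.1.
  move=> e; move: hz1; rewrite -e; have -> : d x x = 0 by apply/deq.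
  by rewrite leNgt mulr_gt0 // (lt_trans ltr01 L1).
set t := theta x z.1.
have tpos : 0 < t.
  rewrite lt_neqAle t0 andbT; apply/eqP => /esym /teq; exact: xz.
have qsl := qs_le dm tm qs hM.
have Lm1 : 0 < L - 1 by rewrite subr_gt0.
have K0 : 0 <= (L + 2 * a) / (L - 1) by rewrite divr_ge0 ?ltW //; lra.
have BK : (L + 2 * a) / (L - 1) <= B by rewrite /B lerDl; lra.
have BL : L + 2 * a <= B by rewrite /B lerDr.
have B1 : 1 <= B by lra.
have B2 : 2 * a <= B by lra.
have ratio : forall y p p' K, 0 < d y p' -> d y p <= K * d y p' -> d y p / d y p' <= K.
  by move=> y p p' K hp hK; rewrite ler_pdivrMr.
have ratio1 : forall y p p', 0 < d y p' -> d y p <= d y p' -> d y p / d y p' <= B.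
  move=> y p p' hp hK; apply: ratio => //; apply: le_trans hK _.
  by rewrite ler_pMl.
have rho_ge0 : forall u, 0 <= rho d a lam L Xn mu q k (x, n) u.
  by move=> u; rewrite /rho; case: ifP => _; [exact: powR_ge0|exact: lexx].
set Q := fun u : X * nat => List.In u (w1 :: g') /\ P u.
have pair : forall u u', Defs.adjacent d a lam m u u' -> Q u -> (Q u' \/ u' = z) ->
    c0 / t * theta u.1 u'.1 <= rho d a lam L Xn mu q k (x, n) u.
  move=> [y i] [y' i'] hadj [hin hPu] hu'.
  have dyy' := adj_d _ _ hadj; rewrite /= in dyy'.
  have im : i = m by have := m2 _ hin.
  have i'm : i' = m.
    case: hu' => [[h _]|e]; first exact: (m2 _ h).
    by have := m2 _ (memg z (or_intror erefl)); rewrite -e.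
  have yy' : y <> y'.
    by move=> e; case: hadj => hne _; apply: hne; rewrite e im i'm.
  have dxy' : d x y' <= d x z.1.
    case: hu' => [[_ h]|<-] //; apply: ltW; exact: lt_le_trans h hz1.
  have dxz0 : 0 < d x z.1 by apply: lt_le_trans hz1; rewrite mulr_gt0 // (lt_trans ltr01 L1).
  have txy : theta x y <= M * t.
    apply: qsl => //; apply: ratio1 => //; apply: ltW.
    exact: lt_le_trans hPu hz1.
  have txy' : theta x y' <= M * t.
    by apply: qsl => //; apply: ratio1.
  have tyy'0 : 0 < theta y y'.
    rewrite lt_neqAle t0 andbT; apply/eqP => /esym /teq; exact: yy'.
  set rh := theta y y' / M; set R0 := 3 * M * t.
  have rh0 : 0 < rh by rewrite divr_gt0.
  have rhR : rh <= R0.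
    rewrite /rh ler_pdivrMr //.
    have := ttri y x y'; rewrite (tsym y x).
    have : 2 * (M * t) <= 3 * M * t * M.
      have -> : 3 * M * t * M = 3 * (M * t) * M by ring.
      have : 0 < M * t by rewrite mulr_gt0.
      move: (M * t) => u hu; nra.
    move: (3 * M * t * M) => w.
    move: txy txy'; move: (M * t) => u; lra.
  have inc1 : oball theta y rh `<=` oball d y s.
    move=> p; rewrite /oball /= => hp; rewrite ltNge; apply/negP => hs.
    have yp : y <> p.
      move=> e; move: hs; rewrite -e; have -> : d y y = 0 by apply/deq.
      by rewrite leNgt s0.
    have : theta y y' <= M * theta y p.
      apply: qsl => //; apply: ratio; first exact: lt_le_trans hs.
      apply: le_trans (_ : 2 * a * d y p <= _); last first.
        by rewrite ler_wpM2r ?d0.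
      by apply: ltW; apply: lt_le_trans dyy' _; rewrite ler_wpM2l // mulr_ge0 //; lra.
    move: hp; rewrite /rh ltr_pdivlMr // => hp h.
    by rewrite mulrC in hp; move: (le_lt_trans h hp); rewrite ltxx.
  have inc2 : oball d x r `<=` oball theta y R0.
    move=> p; rewrite /oball /= => hp.
    have : theta x p <= M * t.
      apply: qsl => //; apply: ratio1 => //; apply: ltW; apply: lt_trans hp _.
      apply: lt_le_trans hz1; rewrite ltr_pMl //.
    have := ttri y x p; rewrite (tsym y x) /R0.
    have : 2 * (M * t) < 3 * M * t.
      have -> : 3 * M * t = 3 * (M * t) by ring.
      have : 0 < M * t by rewrite mulr_gt0.
      move: (M * t) => u; lra.
    move: txy; move: (M * t) (3 * M * t) => u1 u2; lra.
  have mdb : forall y0 s0, measurable (oball d y0 s0).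
    by move=> y0 s1; apply: (open_meas E); apply: dball_open.
  have posx : (0 < mu (oball d x r))%E.
    apply: lt_le_trans (_ : mu (oball theta x (t / M)) <= _)%E.
      by apply: (ball_pos E tm hq); rewrite divr_gt0.
    apply: le_measure.
    - by rewrite inE; apply: (open_meas E); apply: theta_ball_open.
    - by rewrite inE; apply: mdb.
    move=> p; rewrite /oball /= => hp; rewrite ltNge; apply/negP => hs.
    have xp : x <> p.
      move=> e; move: hs; rewrite -e; have -> : d x x = 0 by apply/deq.
      by rewrite leNgt r0.
    have : t <= M * theta x p.
      apply: qsl => //; apply: ratio; first exact: lt_le_trans hs.
      apply: le_trans (_ : (L + 2 * a) * d x p <= _); last first.
        by rewrite ler_wpM2r ?d0.
      apply: le_trans (_ : (L + 2 * a) * r <= _); last first.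
        by rewrite ler_wpM2l //; lra.
      apply: ltW; apply: lt_le_trans hz2 _.
      have : 2 * a * s <= 2 * a * r by rewrite ler_wpM2l //; lra.
      rewrite mulrDl; lra.
    move: hp; rewrite ltr_pdivlMr // => hp h.
    by rewrite mulrC in hp; move: (le_lt_trans h hp); rewrite ltxx.
  have key := ratio_bound E tm q0 C'1 mfin hC' (mdb y s) (mdb x r) rh0 rhR inc1 inc2 posx.
  rewrite /rho asboolT; last first.
    split.
      exists y; split.
        rewrite /Bv /oball /=; have -> : d y y = 0 by apply/deq.
        by rewrite im -/s.
      rewrite /oball /=; apply: lt_trans hPu _.
      by rewrite -/r ltr_pM2r // ltrDl.
    by exists (w1 :: g'); split.
  have -> : c0 / t * theta (y, i).1 (y', i').1 = (C'^-1) `^ q^-1 * (rh / R0).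
    rewrite /c0 /rh /R0 /=; field.
    by rewrite ?gt_eqF // mulr_gt0.
  apply: le_trans key _; rewrite /Bv /= im; exact: lexx.
have hQ : forall y, List.In y (w1 :: g1) -> Q y.
  by move=> y hy; split; [apply: memg; left|apply: hP1].
have S1 := @chain_sum R X _ (rho d a lam L Xn mu q k (x, n))
  (fun u u' => theta u.1 u'.1) Q (c0 / t) z (ltW (divr_gt0 c00 tpos)) pair
  (fun u u' u'' => ttri _ _ _) g1 w1 hch1 hQ.
have zw : z.1 <> w1.1.
  move=> e; move: hz1; rewrite e leNgt; move/negP; apply.
  apply: lt_le_trans hw1 _; rewrite ler_pMl //; exact: ltW.
have dzw : (L - 1) * r <= d z.1 w1.1.
  have := dtri x w1.1 z.1; rewrite (dsym w1.1).
  have : d x w1.1 < r by exact: hw1.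
  move: hz1; rewrite mulrBl mul1r; lra.
have dzx : d z.1 x <= (L + 2 * a) * r.
  rewrite dsym; apply: ltW; apply: lt_le_trans hz2 _.
  have : 2 * a * s <= 2 * a * r by rewrite ler_wpM2l //; lra.
  rewrite mulrDl; lra.
have hzw : t <= M * theta w1.1 z.1.
  rewrite /t tsym (tsym w1.1); apply: qsl => //; apply: ratio.
    by apply: lt_le_trans dzw; rewrite mulr_gt0.
  apply: le_trans dzx _.
  have -> : (L + 2 * a) * r = (L + 2 * a) / (L - 1) * ((L - 1) * r).
    by rewrite mulrA divfK // gt_eqF.
  apply: le_trans (_ : B * ((L - 1) * r) <= _).
    by rewrite ler_wpM2r // mulr_ge0 // ltW.
  by rewrite ler_wpM2l // (le_trans ler01 B1).
rewrite eg -cat_cons big_cat /=.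
apply: le_trans (_ : \sum_(y <- w1 :: g1) rho d a lam L Xn mu q k (x, n) y <= _); last first.
  by rewrite lerDl; apply: sumr_ge0 => i _; apply: rho_ge0.
apply: le_trans S1.
have -> : c0 / M = c0 / t * (t / M) by field; rewrite ?gt_eqF.
apply: ler_wpM2l; first by rewrite divr_ge0 ?ltW.
by rewrite ler_pdivrMr // mulrC.
Qed.
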